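(* (1) Let $n,m\ge1$, let $A_1,\dots,A_m$ be invertible real $n\times n$ matrices and $B_1,\dots,B_m$ real matrices with $n$ rows, and consider the switched linear control system $x_k=A_{i_k}x_{k-1}+B_{i_k}u_k$, $k\ge1$. If this system is controllable, then there exists a controllable sequence of length $k\le \frac{n(n+1)}{2}$. (2) For all integers $n\ge1$ and $m\ge1$ there exist invertible real $n\times n$ matrices $A_1,\dots,A_m$ and real matrices $B_1,\dots,B_m$ with $n$ rows such that the corresponding switched linear control system is controllable and its shortest controllable sequences have length (a) $n+\frac{m(m-1)}{2}$ if $m\le n$; (b) $\frac{n(n+1)}{2}$ if $m>n$.
   Context: $\Sigma=\{1,\dots,m\}$, $\Sigma^*$ is the set of finite words over $\Sigma$. For $\pi=i_1\cdots i_k\in\Sigma^*$, $\mathcal{R}(\pi)=\mathrm{Im}(A_{i_k}\cdots A_{i_2}B_{i_1},\dots,A_{i_k}B_{i_{k-1}},B_{i_k})$ is the set of states reachable at time $k$ from $x_0=0$ with switching sequence $i_1,\dots,i_k$ and arbitrary inputs. A sequence $\pi$ is controllable if $\mathcal{R}(\pi)=\mathbb{R}^n$; its length is the number of symbols. The system is controllable if $\bigcup_{\pi\in\Sigma^*}\mathcal{R}(\pi)=\mathbb{R}^n$. *)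

(* Defs.v *)
From HB Require Import structures.
From mathcomp Require Import all_boot all_order all_algebra.
From mathcomp Require Export reals.
Set Implicit Arguments. Unset Strict Implicit. Unset Printing Implicit Defensive.
Import Order.TTheory GRing.Theory Num.Theory.
Local Open Scope ring_scope.

(* Inputs: u k i is the input applied at time k (k >= 1) if the mode is i. *)
Section Switched.
Variables (R : realType) (n m : nat) (p : 'I_m -> nat).
Variables (A : 'I_m -> 'M[R]_n) (B : forall i : 'I_m, 'M[R]_(n, p i)).

(* state reached from x at time k-1, applying the sequence pi at times k, k+1, ... *)
Fixpoint run (u : nat -> forall i : 'I_m, 'cV[R]_(p i))
    (x : 'cV[R]_n) (k : nat) (pi : seq 'I_m) : 'cV[R]_n :=
  match pi with
  | [::] => x
  | i :: pi' => run u (A i *m x + B i *m u k i) k.+1 pi'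
  end.

Definition reachable (pi : seq 'I_m) (x : 'cV[R]_n) : Prop :=
  exists u : nat -> forall i : 'I_m, 'cV[R]_(p i), run u 0 1 pi = x.

Definition controllable_seq (pi : seq 'I_m) : Prop :=
  forall x : 'cV[R]_n, reachable pi x.

Definition controllable_system : Prop :=
  forall x : 'cV[R]_n, exists pi : seq 'I_m, reachable pi x.

End Switched.

(* Main.v *)
Require Import Defs.
From HB Require Import structures.
From mathcomp Require Import all_boot all_order all_algebra.
From mathcomp Require Import reals.
From mathcomp Require Import zify.
From Stdlib Require Import Classical.
Set Implicit Arguments. Unset Strict Implicit. Unset Printing Implicit Defensive.
Import Order.TTheory GRing.Theory Num.Theory.

Definition tau (e l j : nat) : nat :=
  if l == 0 then (if j < e then j.+1 else if j == e then 0 else j)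
  else (if j == (e + l).-1 then e + l else if j == e + l then (e + l).-1 else j).
Definition sig (e l j : nat) : nat :=
  if l == 0 then (if j == 0 then e else if j <= e then j.-1 else j)
  else tau e l j.

Ltac crush := rewrite /sig /tau; repeat (case: ifP => /=); try lia.

Lemma tau_sig e l j : tau e l (sig e l j) = j.
Proof. crush. Qed.
Lemma sig_tau e l j : sig e l (tau e l j) = j.
Proof. crush. Qed.
Lemma tau_inj e l : injective (tau e l).
Proof. exact: can_inj (@sig_tau e l). Qed.
Lemma tau_lt e l j N : (e + l < N)%N -> (j < N)%N -> (tau e l j < N)%N.
Proof. crush. Qed.
Lemma sig_lt e l j N : (e + l < N)%N -> (j < N)%N -> (sig e l j < N)%N.
Proof. crush. Qed.

Definition stepS (e : nat) (S : nat -> bool) (l : nat) : nat -> bool :=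
  fun j => S (tau e l j) || ((l == 0) && (j == e)).
Definition SofL e S (ls : seq nat) := foldl (stepS e) S ls.
Definition wt (e j : nat) : nat := if j <= e then 1 else j - e + 1.
Definition Phi e N (S : nat -> bool) := \sum_(0 <= j < N) S j * wt e j.

Lemma SofL_ext e S S' ls : S =1 S' -> SofL e S ls =1 SofL e S' ls.
Proof.
elim: ls S S' => [|l ls IH] S S' H //=.
apply: IH => j; by rewrite /stepS H.
Qed.

Lemma split2 (F : nat -> nat) a N : (a.+1 < N)%N ->
  \sum_(0 <= j < N) F j = \sum_(0 <= j < a) F j + (F a + F a.+1) + \sum_(a.+2 <= j < N) F j.
Proof.
move=> H.
rewrite (@big_cat_nat _ _ _ a) //=; last lia.
rewrite (@big_ltn _ _ _ a) //; last lia.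
rewrite (@big_ltn _ _ _ a.+1) //; lia.
Qed.

Lemma Phi_step e N S l : (e + l < N)%N -> (Phi e N (stepS e S l) <= Phi e N S + 1)%N.
Proof.
move=> H; rewrite /Phi /stepS.
case: (posnP l) => [->|lpos].
  rewrite (@big_cat_nat _ _ _ e.+1) //=; last lia.
  rewrite [X in (_ <= X + _)%N](@big_cat_nat _ _ _ e.+1) //=; last lia.
  have -> : \sum_(e.+1 <= i < N) (S (tau e 0 i) || (0 == 0) && (i == e)) * wt e i =
            \sum_(e.+1 <= i < N) S i * wt e i.
    apply: eq_big_nat => i /andP [h1 h2].
    rewrite /tau /=. have -> : (i < e) = false by lia.
    have -> : (i == e) = false by lia. by rewrite orbF.
  have L1 : \sum_(0 <= i < e.+1) (S (tau e 0 i) || (0 == 0) && (i == e)) * wt e i =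
            \sum_(0 <= i < e) S i.+1 + 1.
    rewrite big_nat_recr //= eqxx orbT /wt leqnn muln1; congr (_ + _).
    apply: eq_big_nat => i /andP [_ h].
    rewrite /tau h; have -> : (i == e) = false by lia.
    rewrite orbF; have -> : (i <= e) = true by lia.
    by rewrite muln1.
  have L2 : \sum_(0 <= i < e.+1) S i * wt e i = S 0 + \sum_(0 <= i < e) S i.+1.
    rewrite big_ltn // big_add1 /= /wt leq0n muln1; congr (_ + _).
    apply: eq_big_nat => i /andP [_ h].
    have -> : (i < e) = true by lia.
    by rewrite muln1.
  rewrite L1 L2; lia.
have hl : l != 0 by lia.
set a := (e + l).-1.
have ha : (e + l) = a.+1 by rewrite /a; lia.
rewrite (@split2 _ a N); last lia.
rewrite [X in (_ <= X + _)%N](@split2 _ a N); last lia.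
have E1 : \sum_(0 <= j < a) (S (tau e l j) || false && (j == e)) * wt e j =
          \sum_(0 <= j < a) S j * wt e j.
  apply: eq_big_nat => i /andP [h1 h2].
  rewrite /tau (negbTE hl) /= orbF -/a.
  have -> : (i == a) = false by lia.
  by have -> : (i == e + l) = false by lia.
have E2 : \sum_(a.+2 <= j < N) (S (tau e l j) || false && (j == e)) * wt e j =
          \sum_(a.+2 <= j < N) S j * wt e j.
  apply: eq_big_nat => i /andP [h1 h2].
  rewrite /tau (negbTE hl) /= orbF -/a.
  have -> : (i == a) = false by lia.
  by have -> : (i == e + l) = false by lia.
rewrite E1 E2 /tau (negbTE hl) /= -/a eqxx.
have -> : (a.+1 == a) = false by lia.
rewrite -ha eqxx ha.
have wa : wt e a = l by rewrite /wt; case: ifP; lia.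
have wb : wt e a.+1 = l.+1 by rewrite /wt; case: ifP; lia.
rewrite wa wb; case: (S a); case: (S a.+1) => /=; lia.
Qed.

Lemma Phi_seq e N S ls : all (fun l => e + l < N)%N ls ->
  (Phi e N (SofL e S ls) <= Phi e N S + size ls)%N.
Proof.
elim/last_ind: ls => [|ls l IH]; first by rewrite addn0.
rewrite all_rcons => /andP [hl hls].
rewrite /SofL foldl_rcons -/(SofL e S ls) size_rcons.
apply: leq_trans (Phi_step _ hl) _; have := IH hls; lia.
Qed.

Lemma Phi0 e N : Phi e N (fun _ => false) = 0.
Proof. by rewrite /Phi big1_idem. Qed.

Lemma wt_sum e k : \sum_(0 <= j < e.+1 + k) wt e j = e.+1 + k + 'C(k.+1, 2).
Proof.
elim: k => [|k IH].
  rewrite addn0 bin_small // addn0.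
  rewrite (@eq_big_nat _ _ _ 0 e.+1 _ (fun _ => 1)); last first.
    by move=> i /andP [_ h]; rewrite /wt; rewrite ltnS in h; rewrite h.
  by rewrite sum_nat_const_nat subn0 muln1.
rewrite addnS big_nat_recr //= IH (binS k.+1 1) bin1 /wt.
have -> : (e.+1 + k <= e) = false by lia.
lia.
Qed.

Lemma Phi_full e N (S : nat -> bool) : (forall j, (j < N)%N -> S j) -> Phi e N S = \sum_(0 <= j < N) wt e j.
Proof.
move=> H; apply: eq_big_nat => i /andP [_ h]; by rewrite H // mul1n.
Qed.

Lemma SofL_rcons e S ls l j :
  SofL e S (rcons ls l) j = SofL e S ls (tau e l j) || ((l == 0) && (j == e)).
Proof. by rewrite /SofL foldl_rcons. Qed.

Lemma SofL_cat e S l1 l2 : SofL e S (l1 ++ l2) = SofL e (SofL e S l1) l2.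
Proof. by rewrite /SofL foldl_cat. Qed.

Fixpoint blocks (k : nat) : seq nat :=
  if k is k'.+1 then iota 0 k.+1 ++ blocks k' else [::].

Lemma size_blocks k : size (blocks k) = k + 'C(k.+1, 2).
Proof.
elim: k => [|k IH] //=; rewrite size_cat size_iota IH (binS k.+1 1) bin1; lia.
Qed.

Lemma blocks_le k : all (fun l => l <= k)%N (blocks k).
Proof.
elim: k => [|k IH] //=; rewrite all_cat; apply/andP; split.
  by apply/allP => l; rewrite mem_iota; lia.
by apply: sub_all IH => l /= h; lia.
Qed.

Lemma chain e (S : nat -> bool) q k : (q <= k)%N -> (forall j, (j <= e + k)%N -> S j = false) ->
  forall j, SofL e (fun j => S j || (j == e)) (iota 1 q) j = S j || (j == e + q).
Proof.
move=> hq hS; elim: q hq => [|q IH] hq j; first by rewrite addn0.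
have -> : iota 1 q.+1 = rcons (iota 1 q) q.+1.
  by rewrite -cats1 -(addn1 q) iotaD add1n addn1.
rewrite SofL_rcons IH; last lia.
rewrite /tau /=; have -> : (e + q.+1).-1 = e + q by lia.
case: (eqVneq j (e + q)) => [->|h1].
  rewrite (hS (e + q.+1)); last lia.
  rewrite (hS (e + q)); last lia.
  by apply/idP/idP; lia.
case: (eqVneq j (e + q.+1)) => [->|h2].
  by rewrite eqxx !orbT.
by rewrite (negbTE h1) !orbF.
Qed.

Lemma block e (S : nat -> bool) k : (forall j, (j <= e + k)%N -> S j = false) ->
  forall j, SofL e S (iota 0 k.+1) j = S j || (j == e + k).
Proof.
move=> hS j; rewrite /= -/(SofL _ _ _).
rewrite (@SofL_ext e _ (fun j => S j || (j == e))); first exact: (@chain e S k k (leqnn k) hS).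
move=> i; rewrite /stepS /tau /=.
case: (ltnP i e) => h1.
  by rewrite !hS; try lia; have -> : (i == e) = false by lia.
case: (eqVneq i e) => [->|h2]; first by rewrite !orbT.
by [].
Qed.

Lemma blocksP e (S : nat -> bool) k : (forall j, (j <= e + k)%N -> S j = false) ->
  forall j, SofL e S (blocks k) j = S j || ((e < j) && (j <= e + k)).
Proof.
elim: k S => [|k IH] S hS j /=.
  by rewrite orbC; have -> : (e < j) && (j <= e + 0) = false by lia.
rewrite SofL_cat.
rewrite (@SofL_ext e _ (fun j => S j || (j == e + k.+1))); last first.
  move=> i; exact: (@block e S k.+1 hS).
rewrite IH; last by move=> i hi; rewrite hS /=; lia.
by case: (S j) => //=; apply/idP/idP; lia.
Qed.

Lemma nseqSr (T : Type) q (x : T) : nseq q.+1 x = rcons (nseq q x) x.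
Proof. by elim: q => //= q <-. Qed.

Lemma cyc e (S : nat -> bool) q : (q <= e.+1)%N -> (forall j, (j <= e)%N -> S j = false) ->
  forall j, SofL e S (nseq q 0) j = S j || ((e.+1 - q <= j) && (j <= e)).
Proof.
move=> hq hS; elim: q hq => [|q IH] hq j.
  by rewrite /= orbC; have -> : (e.+1 - 0 <= j) && (j <= e) = false by lia.
rewrite nseqSr SofL_rcons IH; last lia.
rewrite /tau /=.
case: (ltnP j e) => h1.
  rewrite h1 (hS j.+1); last lia.
  rewrite (hS j); last lia.
  by apply/idP/idP; lia.
case: (eqVneq j e) => [->|h2].
  rewrite orbT; symmetry; apply/orP; right; apply/andP; split; lia.
rewrite orbF; have -> : (j <= e) = false by lia.
by rewrite !andbF.
Qed.

Local Open Scope ring_scope.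

Section Gen.
Variables (R : realType) (n m : nat) (p : 'I_m -> nat).
Variables (A : 'I_m -> 'M[R]_n) (B : forall i : 'I_m, 'M[R]_(n, p i)).

Lemma run_rcons u x k pi i :
  run A B u x k (rcons pi i) = A i *m run A B u x k pi + B i *m u (k + size pi)%N i.
Proof.
elim: pi x k => [|j pi IH] x k /=; first by rewrite addn0.
by rewrite IH addSnnS.
Qed.

Lemma run_ext u u' x k pi : (forall t, (t < k + size pi)%N -> u t = u' t) ->
  run A B u x k pi = run A B u' x k pi.
Proof.
elim: pi x k => [|j pi IH] x k //= H.
rewrite (H k); last by rewrite /= -addSnnS leq_addr.
apply: IH => t Ht; apply: H; by rewrite /= -addSnnS.
Qed.

Definition stepV (M : 'M[R]_n) (i : 'I_m) : 'M[R]_n := (M *m (A i)^T + (B i)^T)%MS.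
Definition Vfrom M (w : seq 'I_m) := foldl stepV M w.
Definition Vs pi := Vfrom 0 pi.

Lemma reachableP pi x : reachable A B pi x <-> (x^T <= Vs pi)%MS.
Proof.
elim/last_ind: pi x => [|pi i IH] x.
  rewrite /Vs /= submx0; split.
    by move=> [u <-] /=; rewrite raddf0.
  move=> /eqP H; exists (fun _ _ => 0) => /=.
  by rewrite -[x]trmxK H raddf0.
rewrite /Vs /Vfrom foldl_rcons -/(Vfrom 0 pi) -/(Vs pi) /stepV; split.
  move=> [u <-]; rewrite run_rcons raddfD /= !trmx_mul.
  apply: addmx_sub_adds; last exact: submxMl.
  apply: submxMr; apply/IH; by exists u.
move=> /sub_addsmxP [[a b] /= Hx].
have : ((a *m Vs pi)^T^T <= Vs pi)%MS by rewrite trmxK submxMl.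
move=> /IH [u Hu].
pose u' := fun t => if t == (1 + size pi)%N then dfwith (u t) (b^T) else u t.
exists u'; rewrite run_rcons.
rewrite -(@run_ext u); last by move=> t Ht; rewrite /u' (ltn_eqF Ht).
rewrite Hu /u' eqxx dfwith_in.
rewrite -[x]trmxK Hx raddfD /= !trmx_mul !trmxK mulmxA.
by [].
Qed.


Lemma Vfrom_mono M N w : (M <= N)%MS -> (Vfrom M w <= Vfrom N w)%MS.
Proof.
elim: w M N => [|i w IH] M N //= H.
apply: IH; rewrite /stepV; apply: addsmxS => //; exact: submxMr.
Qed.

Lemma Vs_cat pi w : Vs (pi ++ w) = Vfrom (Vs pi) w.
Proof. by rewrite /Vs /Vfrom foldl_cat. Qed.

Lemma Vs_sub_cat pi w : (Vs w <= Vs (pi ++ w))%MS.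
Proof. rewrite Vs_cat; apply: Vfrom_mono; exact: sub0mx. Qed.

Definition Aw (w : seq 'I_m) : 'M[R]_n := foldl (fun P i => P *m (A i)^T) 1%:M w.

Hypothesis hA : forall i, A i \in unitmx.

Lemma Aw_unit w : Aw w \in unitmx.
Proof.
elim/last_ind: w => [|w i IH]; first by rewrite /Aw /= unitmx1.
by rewrite /Aw foldl_rcons -/(Aw w) unitmx_mul IH unitmx_tr hA.
Qed.

Lemma Vfrom_Aw M w : (M *m Aw w <= Vfrom M w)%MS.
Proof.
elim/last_ind: w => [|w i IH]; first by rewrite /Aw /= mulmx1.
rewrite /Aw /Vfrom !foldl_rcons -/(Aw w) -/(Vfrom M w) /stepV mulmxA.
apply: submx_trans (addsmxSl _ _); exact: submxMr.
Qed.

Lemma max_exists (f : seq 'I_m -> nat) : (forall s, (f s <= n)%N) ->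
  exists s, forall s', (f s' <= f s)%N.
Proof.
move=> hb; apply: NNPP => H.
have K : forall k, exists s, (k <= f s)%N.
  elim => [|k [s Hs]]; first by exists [::].
  apply: NNPP => H2; apply: H; exists s => s'.
  case: (leqP (f s') (f s)) => // Hlt; exfalso; apply: H2; exists s'; lia.
have [s Hs] := K n.+1; have := hb s; lia.
Qed.

Lemma ctrl_exists : controllable_system A B -> exists pi, \rank (Vs pi) = n.
Proof.
move=> hC.
have [pi0 Hmax] := @max_exists (fun s => \rank (Vs s)) (fun s => rank_leq_col (Vs s)).
exists pi0; apply/eqP; rewrite eqn_leq rank_leq_col /=.
apply/negP => /negP; rewrite -ltnNge => Hlt.
have key : forall w, (Vs w *m Aw pi0 <= Vs pi0)%MS.
  move=> w; have H1 : (Vs pi0 <= Vs (w ++ pi0))%MS := Vs_sub_cat w pi0.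
  have E : (Vs (w ++ pi0) <= Vs pi0)%MS.
    by rewrite -(mxrank_leqif_sup H1).2 eqn_leq mxrankS //= Hmax.
  apply: submx_trans E; rewrite Vs_cat; exact: Vfrom_Aw.
have [j Hj] : exists j : 'I_n, ~~ ((delta_mx 0 j : 'rV[R]_n) <= Vs pi0)%MS.
  apply: NNPP => H.
  have : (1%:M <= Vs pi0)%MS.
    apply/row_subP => j; rewrite row1; apply/negPn/negP => Hn; apply: H; by exists j.
  move/mxrankS; rewrite mxrank1 => ?; lia.
have [w /reachableP Hw] := hC (('e_j *m invmx (Aw pi0))^T).
move: Hw; rewrite trmxK => /(submxMr (Aw pi0)) Hw.
have := submx_trans Hw (key w); rewrite mulmxKV ?Aw_unit // => H.
by rewrite H in Hj.
Qed.

Definition Wf (X : 'M[R]_n) : 'M[R]_n :=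
  (\sum_(i < m) (((B i)^T *m invmx (A i)^T)%R + (X *m invmx (A i)^T)%R))%MS.

Lemma Wf_mono X Y : (X <= Y)%MS -> (Wf X <= Wf Y)%MS.
Proof.
move=> H; apply/sumsmx_subP => i _; apply: (sumsmx_sup i) => //.
apply: addsmxS => //; exact: submxMr.
Qed.

Lemma Wf_sub X (M : 'M[R]_n) : (Wf X <= M)%MS ->
  forall i, ((B i)^T *m invmx (A i)^T <= M)%MS /\ (X *m invmx (A i)^T <= M)%MS.
Proof.
move=> /sumsmx_subP H i; have := H i isT; rewrite addsmx_sub => /andP [] //.
Qed.

Lemma sub_Wf X (M : 'M[R]_n) : (forall i, ((B i)^T *m invmx (A i)^T <= M)%MS /\ (X *m invmx (A i)^T <= M)%MS)
  -> (Wf X <= M)%MS.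
Proof.
move=> H; apply/sumsmx_subP => i _; rewrite addsmx_sub; have [-> ->] := H i; done.
Qed.

Definition W k := iter k Wf 0.

Lemma W_inc k : (W k <= W k.+1)%MS.
Proof. elim: k => [|k IH]; first exact: sub0mx. exact: Wf_mono. Qed.

Lemma W_le j k : (j <= k)%N -> (W j <= W k)%MS.
Proof.
elim: k => [|k IH]; first by rewrite leqn0 => /eqP ->.
rewrite leq_eqVlt => /orP [/eqP -> //|]; rewrite ltnS => /IH H.
exact: submx_trans H (W_inc k).
Qed.

Lemma W_stab j : (W j.+1 <= W j)%MS -> forall k, (W k <= W j)%MS.
Proof.
move=> Hj k; case: (leqP k j) => [|Hk]; first exact: W_le.
elim: k Hk => [//|k IH]; rewrite ltnS leq_eqVlt => /orP [/eqP <- //|/IH Hk].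
exact: submx_trans (Wf_mono Hk) Hj.
Qed.

Lemma W_rank k : (forall j, (j < k)%N -> ~~ (W j.+1 <= W j)%MS) -> (k <= \rank (W k))%N.
Proof.
elim: k => [//|k IH] H.
have Hk := IH (fun j hj => H j (ltnW hj)).
have := (mxrank_leqif_sup (W_inc k)).2; rewrite (negbTE (H k (ltnSn k))) => E.
have L := mxrankS (W_inc k).
apply: leq_ltn_trans Hk _; rewrite ltn_neqAle E L //.
Qed.

Lemma subV k (X : 'M[R]_(k, n)) (M : 'M[R]_n) i : (X *m invmx (A i)^T <= M)%MS -> (X <= M *m (A i)^T)%MS.
Proof.
move=> /(submxMr (A i)^T); rewrite mulmxKV // unitmx_tr hA //.
Qed.

Lemma rankMA (M : 'M[R]_n) i : \rank (M *m (A i)^T) = \rank M.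
Proof. by rewrite mxrankMfree // row_free_unit unitmx_tr hA. Qed.

Lemma KL w M : (forall k, (W k <= M)%MS) -> (\rank (Vfrom M w) <= \rank M)%N.
Proof.
elim: w M => [|j w IH] M H //=.
have [h1 _] := Wf_sub (H 1%N) j.
have h2 : forall k, (W k <= stepV M j)%MS.
  move=> k; have [_ h] := Wf_sub (H k.+1) j.
  apply: submx_trans (addsmxSl _ _); exact: subV.
apply: leq_trans (IH _ h2) _.
have : (stepV M j <= M *m (A j)^T)%MS.
  by rewrite /stepV addsmx_sub submx_refl /=; apply: subV.
by move/mxrankS; rewrite rankMA.
Qed.

Lemma L1 k M : (forall w, (size w <= k)%N -> (\rank (Vfrom M w) <= \rank M)%N) ->
  (W k <= M)%MS.
Proof.
elim: k M => [|k IH] M H; first exact: sub0mx.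
apply: sub_Wf => i.
have s1 : (M *m (A i)^T <= stepV M i)%MS by apply: addsmxSl.
have r : (\rank (stepV M i) <= \rank M)%N by apply: (H [:: i]).
have s2 : (stepV M i <= M *m (A i)^T)%MS.
  by rewrite -(mxrank_leqif_sup s1).2 eqn_leq mxrankS // rankMA r.
have hk : (W k <= stepV M i)%MS.
  apply: IH => w hw; have := H (i :: w) hw => /= h.
  apply: leq_trans h _; rewrite -(rankMA M i); exact: mxrankS.
split.
  have hAt : (A i)^T \in unitmx by rewrite unitmx_tr hA.
  rewrite -[M](mulmxK hAt); apply: submxMr.
  apply: submx_trans s2; exact: addsmxSr.
have hAt : (A i)^T \in unitmx by rewrite unitmx_tr hA.
rewrite -[M](mulmxK hAt); apply: submxMr.
exact: submx_trans hk s2.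
Qed.

Lemma escape pistar pi : \rank (Vs pistar) = n -> (\rank (Vs pi) < n)%N ->
  exists w, (size w <= (\rank (Vs pi)).+1)%N /\ (\rank (Vs pi) < \rank (Vs (pi ++ w)))%N.
Proof.
move=> Hs Hlt; set d := \rank (Vs pi).
apply: NNPP => H.
have H' : forall w, (size w <= d.+1)%N -> (\rank (Vfrom (Vs pi) w) <= \rank (Vs pi))%N.
  move=> w hw; case: (leqP (\rank (Vfrom (Vs pi) w)) d) => // lt; exfalso.
  apply: H; exists w; by rewrite Vs_cat.
have HW := L1 H'.
have [j [hj Wj]] : exists j, (j < d.+1)%N /\ (W j.+1 <= W j)%MS.
  apply: NNPP => H2.
  have := @W_rank d.+1 (fun j hj => introN idP (fun h => H2 (ex_intro _ j (conj hj h)))).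
  have := mxrankS HW; rewrite -/d; lia.
have HWall : forall k, (W k <= Vs pi)%MS.
  move=> k; apply: submx_trans HW; apply: submx_trans (W_stab Wj k) _.
  by apply: W_le; rewrite ltnW.
have := KL pistar HWall.
have := mxrankS (Vfrom_mono pistar (sub0mx n (Vs pi))).
rewrite -/(Vs pistar) Hs -/d; lia.
Qed.

Lemma part1_main : controllable_system A B ->
  exists pi, (size pi <= (n * n.+1) %/ 2)%N /\ controllable_seq A B pi.
Proof.
move=> hC; have [pistar Hs] := ctrl_exists hC.
have K : forall d, (d <= n)%N -> exists pi, (2 * size pi <= d * d.+1)%N /\ (d <= \rank (Vs pi))%N.
  elim => [|d IH] hd; first by exists [::].
  have [pi [h1 h2]] := IH (ltnW hd).
  case: (leqP d.+1 (\rank (Vs pi))) => h3.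
    exists pi; split => //; nia.
  have hr : \rank (Vs pi) = d by apply/eqP; rewrite eqn_leq h2 -ltnS h3.
  have [w [hw1 hw2]] := escape Hs (leq_ltn_trans (eq_leq hr) hd).
  exists (pi ++ w); rewrite size_cat; rewrite hr in hw1 hw2; split; [nia | lia].
have [pi [h1 h2]] := K n (leqnn n).
exists pi; split; first by rewrite leq_divRL //; lia.
move=> x; apply/reachableP; apply: submx_full.
by rewrite /row_full eqn_leq rank_leq_col h2.
Qed.

End Gen.

Section Constr.
Variables (R : realType) (n' m' : nat).
Local Notation n := n'.+1.
Local Notation m := m'.+1.

Definition cc := minn m n.
Definition ee := (n - cc)%N.
Definition lab (i : 'I_m) : nat := minn i cc.-1.

Lemma cc_pos : (0 < cc)%N. Proof. rewrite /cc; lia. Qed.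
Lemma ee_cc : (ee + cc)%N = n. Proof. rewrite /ee /cc; lia. Qed.
Lemma lab_lt i : (lab i < cc)%N.
Proof. have := cc_pos; rewrite /lab; lia. Qed.
Lemma lab_n i : (ee + lab i < n)%N.
Proof. have := lab_lt i; have := ee_cc; lia. Qed.

Definition Amat (i : 'I_m) : 'M[R]_n :=
  \matrix_(j, k) ((k : nat) == tau ee (lab i) j)%:R.
Definition Ainv (i : 'I_m) : 'M[R]_n :=
  \matrix_(j, k) ((k : nat) == sig ee (lab i) j)%:R.
Definition Bmat (i : 'I_m) : 'M[R]_(n, 1) :=
  \matrix_(j, k) ((lab i == 0%N) && ((j : nat) == ee))%:R.

Lemma sum_pick (f : 'I_n -> R) a : (a < n)%N ->
  \sum_(k < n) ((k : nat) == a)%:R * f k = f (inord a).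
Proof.
move=> ha; rewrite (bigD1 (inord a)) //= inordK // eqxx mul1r big1 ?addr0 //.
move=> k hk; have -> : ((k : nat) == a) = false; last by rewrite mul0r.
apply/negbTE; apply: contra hk => /eqP hk; apply/eqP; apply: val_inj; by rewrite /= inordK.
Qed.

Lemma tau_lt' i (j : 'I_n) : (tau ee (lab i) j < n)%N.
Proof. apply: tau_lt (lab_n i) (ltn_ord j). Qed.
Lemma sig_lt' i (j : 'I_n) : (sig ee (lab i) j < n)%N.
Proof. apply: sig_lt (lab_n i) (ltn_ord j). Qed.

Lemma Amat_unit i : Amat i \in unitmx.
Proof.
suff H : Amat i *m Ainv i = 1%:M by have [] := mulmx1_unit H.
apply/matrixP => j k; rewrite !mxE.
rewrite (eq_bigr (fun l : 'I_n => ((l : nat) == tau ee (lab i) j)%:R * ((k : nat) == sig ee (lab i) l)%:R)); last first.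
  by move=> l _; rewrite !mxE.
rewrite (@sum_pick (fun l : 'I_n => ((k : nat) == sig ee (lab i) l)%:R)); last exact: tau_lt'.
rewrite inordK ?tau_lt' // sig_tau eq_sym.
by [].
Qed.

Lemma Amat_mul i (x : 'cV[R]_n) (j : 'I_n) :
  (Amat i *m x) j 0 = x (inord (tau ee (lab i) j)) 0.
Proof.
rewrite mxE (eq_bigr (fun l : 'I_n => ((l : nat) == tau ee (lab i) j)%:R * x l 0)).
  by rewrite sum_pick // tau_lt'.
by move=> l _; rewrite mxE.
Qed.

Definition Sof (pi : seq 'I_m) := SofL ee (fun _ => false) (map lab pi).

Lemma supp u (x : 'cV[R]_n) k pi (S : nat -> bool) :
  (forall j : 'I_n, S j = false -> x j 0 = 0) ->
  forall j : 'I_n, SofL ee S (map lab pi) j = false -> run Amat Bmat u x k pi j 0 = 0.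
Proof.
elim: pi S x k => [|i pi IH] S x k hx j //=; first exact: hx.
apply: IH => {}j; rewrite /stepS => /norP [h1 h2].
rewrite mxE Amat_mul hx; last by rewrite inordK ?tau_lt' //; apply/negbTE.
rewrite add0r mxE big1 // => l _; rewrite mxE (negbTE h2) mul0r //.
Qed.

Lemma lower pi : controllable_seq Amat Bmat pi -> (n + 'C(cc, 2) <= size pi)%N.
Proof.
move=> H; have [u hu] := H (const_mx 1).
have hall : forall j, (j < n)%N -> Sof pi j.
  move=> j hj; apply/negPn/negP => /negbTE hf.
  have h0 : forall j0 : 'I_n, false = false -> (0 : 'cV[R]_n) j0 0 = 0 by move=> j0 _; rewrite mxE.
  have := @supp u 0 1 pi (fun _ => false) h0 (Ordinal hj) hf.
  rewrite hu mxE => /eqP; by rewrite oner_eq0.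
have := @Phi_seq ee n (fun _ => false) (map lab pi).
rewrite Phi0 add0n size_map -/(Sof pi) (Phi_full ee hall).
have -> : n = (ee.+1 + cc.-1)%N by have := ee_cc; have := cc_pos; lia.
rewrite wt_sum prednK ?cc_pos //.
have -> : (ee.+1 + cc.-1 = ee + cc)%N by have := cc_pos; lia.
move=> h; apply: h; apply/allP => l /mapP [i _ ->]; have := lab_n i; rewrite ee_cc //.
Qed.

Lemma dA i (j : 'I_n) : delta_mx 0 (inord (tau ee (lab i) j)) *m (Amat i)^T = delta_mx 0 j :> 'rV[R]_n.
Proof.
rewrite -rowE; apply/rowP => k; rewrite !mxE inordK ?tau_lt' //.
rewrite (inj_eq (@tau_inj _ _)) eqxx /=. by rewrite eq_sym.
Qed.

Lemma Vlow pi (j : 'I_n) : Sof pi j -> ((delta_mx 0 j : 'rV[R]_n) <= Vs Amat Bmat pi)%MS.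
Proof.
elim/last_ind: pi j => [|pi i IH] j //.
rewrite /Sof map_rcons SofL_rcons -/(Sof pi) => /orP [h|/andP [h1 h2]];
  rewrite /Vs /Vfrom foldl_rcons -/(Vfrom _ _ _ pi) -/(Vs _ _ pi) /stepV.
  apply: submx_trans (addsmxSl _ _); rewrite -(dA i j); apply: submxMr; apply: IH.
  by rewrite inordK ?tau_lt'.
apply: submx_trans (addsmxSr _ _).
have -> : delta_mx 0 j = (Bmat i)^T.
  apply/rowP => k; rewrite !mxE h1 /=. by rewrite -(eqP h2).
exact: submx_refl.
Qed.

Definition wls := (blocks cc.-1 ++ nseq ee.+1 0)%N.
Definition wpi : seq 'I_m := map (fun l => inord l) wls.

Lemma map_lab_wpi : map lab wpi = wls.
Proof.
rewrite /wpi -map_comp; apply: map_id_in => l hl /=.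
have hl' : (l <= cc.-1)%N.
  move: hl; rewrite /wls mem_cat => /orP [h|]; first by have := allP (blocks_le cc.-1) l h.
  by move/nseqP => [-> _].
rewrite /lab inordK; first lia.
have := cc_pos; rewrite /cc in hl' *; lia.
Qed.

Lemma Sof_wpi (j : 'I_n) : Sof wpi j.
Proof.
rewrite /Sof map_lab_wpi /wls SofL_cat.
rewrite (@SofL_ext ee _ (fun j => (ee < j) && (j <= ee + cc.-1))%N); last first.
  by move=> i; rewrite blocksP.
rewrite cyc //; last by move=> i hi; lia.
rewrite subnn; have := ltn_ord j; have := ee_cc; have := cc_pos.
case: (ltnP ee j) => h *; apply/orP; [left|right]; lia.
Qed.

Lemma ctrl_wpi : controllable_seq Amat Bmat wpi.
Proof.
move=> x; apply/reachableP; apply: submx_trans (submx1 _) _.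
apply/row_subP => j; rewrite row1; exact: Vlow (Sof_wpi j).
Qed.

Lemma size_wpi : size wpi = (n + 'C(cc, 2))%N.
Proof.
rewrite size_map /wls size_cat size_blocks size_nseq prednK ?cc_pos //.
have := ee_cc; have := cc_pos; lia.
Qed.

End Constr.

Theorem theorem2 (R : realType) :
  (* (1) *)
  (forall (n m : nat) (p : 'I_m -> nat) (A : 'I_m -> 'M[R]_n)
          (B : forall i : 'I_m, 'M[R]_(n, p i)),
      (1 <= n)%N -> (1 <= m)%N ->
      (forall i, A i \in unitmx) ->
      controllable_system A B ->
      exists pi : seq 'I_m,
        (size pi <= (n * n.+1) %/ 2)%N /\ controllable_seq A B pi)
  /\
  (* (2) *)
  (forall n m : nat, (1 <= n)%N -> (1 <= m)%N ->
    exists (p : 'I_m -> nat) (A : 'I_m -> 'M[R]_n)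
           (B : forall i : 'I_m, 'M[R]_(n, p i)),
      (forall i, 0 < p i)%N /\
      (forall i, A i \in unitmx) /\
      controllable_system A B /\
      let L := if (m <= n)%N then (n + (m * m.-1) %/ 2)%N
               else ((n * n.+1) %/ 2)%N in
      (exists pi : seq 'I_m, size pi = L /\ controllable_seq A B pi) /\
      (forall pi : seq 'I_m, controllable_seq A B pi -> (L <= size pi)%N)).
Proof.
split.
  move=> n m p A B _ _ hA hC; exact: (part1_main hA hC).
move=> n m hn hm.
case: n hn => [//|n'] _; case: m hm => [//|m'] _.
exists (fun _ => 1%N), (@Amat R n' m'), (@Bmat R n' m').
split; first by [].
split; first exact: Amat_unit.
split; first by move=> x; exists (wpi n' m'); exact: ctrl_wpi.
intro L.
have EL : L = (n'.+1 + 'C(cc n' m', 2))%N.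
  rewrite /L /cc; case: (leqP m'.+1 n'.+1) => h.
    by rewrite bin2 divn2.
  rewrite divn2 mulnC -bin2 /= (binS n'.+1 1) bin1 addnC //.
split.
  exists (wpi n' m'); rewrite EL; split; [exact: size_wpi | exact: ctrl_wpi].
move=> pi hpi; rewrite EL; exact: lower hpi.
Qed.
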